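(* Let $l\geq 2$ and $\phi_{K_l}(x,y)=S_{l-1}(\lambda)\alpha-S_{l-2}(\lambda)\beta$ be the Riley polynomial of $K_l$ as below. Then for each fixed real $x$, $\lim_{y\to\infty}(-1)^l\phi_{K_l}(x,y)=+\infty$.
   Context: $S_n$: $S_0=1$, $S_1=z$, $S_{n+1}=zS_n-S_{n-1}$. $\lambda(x,y)=9x^2-12x^4+4x^6-5y+10x^2y+2x^4y-4x^6y-11x^2y^2+8x^4y^2+x^6y^2+5y^3-4x^2y^3-3x^4y^3+3x^2y^4-y^5$, $\alpha(x,y)=1-4x^2+2x^4+2y-x^2y-x^4y-y^2+2x^2y^2-y^3$, $\beta(x,y)=-1+x^2-y$. $K_l$ is the two-bridge knot $K(10(l-1)+7,4(l-1)+3)$. *)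

(* Defs.v *)
From Stdlib Require Import Reals.
Open Scope R_scope.

Fixpoint S (n : nat) (z : R) : R :=
  match n with
  | O => 1
  | Datatypes.S m =>
      match m with
      | O => z
      | Datatypes.S k => z * S m z - S k z
      end
  end.

Definition lam (x y : R) : R :=
  9*x^2 - 12*x^4 + 4*x^6 - 5*y + 10*x^2*y + 2*x^4*y - 4*x^6*y
  - 11*x^2*y^2 + 8*x^4*y^2 + x^6*y^2 + 5*y^3 - 4*x^2*y^3 - 3*x^4*y^3
  + 3*x^2*y^4 - y^5.

Definition alpha (x y : R) : R :=
  1 - 4*x^2 + 2*x^4 + 2*y - x^2*y - x^4*y - y^2 + 2*x^2*y^2 - y^3.

Definition beta (x y : R) : R := -1 + x^2 - y.

(* Riley polynomial of K_l = K(10(l-1)+7, 4(l-1)+3), for l >= 2. *)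
Definition phiK (l : nat) (x y : R) : R :=
  S (l - 1) (lam x y) * alpha x y - S (l - 2) (lam x y) * beta x y.

(* Main.v *)
Require Import Defs.
From Stdlib Require Import Reals Lra Lia Psatz.
Open Scope R_scope.

Lemma S_SS n z : S (Datatypes.S (Datatypes.S n)) z = z * S (Datatypes.S n) z - S n z.
Proof. reflexivity. Qed.

Lemma S_neg n w : S n (- w) = (-1) ^ n * S n w.
Proof.
  assert (H : forall n, S n (-w) = (-1)^n * S n w /\ S (Datatypes.S n) (-w) = (-1)^(Datatypes.S n) * S (Datatypes.S n) w).
  { induction n0 as [|n0 [IH1 IH2]].
    - simpl. split; ring.
    - split; [exact IH2|]. rewrite !S_SS, IH1, IH2. simpl. ring. }
  apply H.
Qed.

Lemma S_mono w (hw : 2 <= w) n : 1 <= S n w /\ S n w + 1 <= S (Datatypes.S n) w.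
Proof.
  induction n as [|n [IH1 IH2]].
  - simpl. lra.
  - split; [lra|]. rewrite S_SS. nra.
Qed.

Lemma S_ge_w w (hw : 2 <= w) m : w <= S (Datatypes.S m) w.
Proof.
  induction m as [|m IH].
  - simpl. lra.
  - destruct (S_mono w hw (Datatypes.S m)). lra.
Qed.

Lemma pm1sq k : (-1) ^ k * (-1) ^ k = 1.
Proof. rewrite <- Rpow_mult_distr. replace (-1 * -1) with 1 by ring. apply pow1. Qed.

Lemma lam_bound x y (hy : 1 <= y) :
  let a := x^2 in let C := 30 * (1 + a)^3 in
  - lam x y >= y^4 * (y - 5 * C).
Proof.
  intros a C.
  assert (ha : 0 <= a) by (unfold a; nra).
  assert (E : - lam x y = y^5 + (-3*a) * y^4 + (-5+4*a+3*a^2) * y^3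
     + (11*a-8*a^2-a^3) * y^2 + (5-10*a-2*a^2+4*a^3) * y + (-9*a+12*a^2-4*a^3)).
  { unfold lam, a. ring. }
  rewrite E.
  assert (y1 : y <= y^2) by nra.
  assert (y2 : y^2 <= y^3) by nra.
  assert (y3 : y^3 <= y^4) by nra.
  assert (c0 : -C <= -9*a+12*a^2-4*a^3) by (unfold C; nra).
  assert (c1 : -C <= 5-10*a-2*a^2+4*a^3) by (unfold C; nra).
  assert (c2 : -C <= 11*a-8*a^2-a^3) by (unfold C; nra).
  assert (c3 : -C <= -5+4*a+3*a^2) by (unfold C; nra).
  assert (c4 : -C <= -3*a) by (unfold C; nra).
  assert (Cp : 0 <= C) by (unfold C; nra).
  assert (1 <= y^4) by nra.
  assert (t0 : -C * y^4 <= -9*a+12*a^2-4*a^3) by nra.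
  assert (t1 : -C * y^4 <= (5-10*a-2*a^2+4*a^3) * y) by nra.
  assert (t2 : -C * y^4 <= (11*a-8*a^2-a^3) * y^2) by nra.
  assert (t3 : -C * y^4 <= (-5+4*a+3*a^2) * y^3) by nra.
  assert (t4 : -C * y^4 <= (-3*a) * y^4) by nra.
  nra.
Qed.

Lemma alpha_bound x y (hy : 1 <= y) :
  let a := x^2 in let C := 30 * (1 + a)^3 in
  - alpha x y >= y^2 * (y - 3 * C).
Proof.
  intros a C.
  assert (ha : 0 <= a) by (unfold a; nra).
  assert (E : - alpha x y = y^3 + (1-2*a) * y^2 + (-2+a+a^2) * y + (-1+4*a-2*a^2)).
  { unfold alpha, a. ring. }
  rewrite E.
  assert (y1 : y <= y^2) by nra.
  assert (1 <= y^2) by nra.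
  assert (c0 : -C <= -1+4*a-2*a^2) by (unfold C; nra).
  assert (c1 : -C <= -2+a+a^2) by (unfold C; nra).
  assert (c2 : -C <= 1-2*a) by (unfold C; nra).
  assert (Cp : 0 <= C) by (unfold C; nra).
  assert (t0 : -C * y^2 <= -1+4*a-2*a^2) by nra.
  assert (t1 : -C * y^2 <= (-2+a+a^2) * y) by nra.
  assert (t2 : -C * y^2 <= (1-2*a) * y^2) by nra.
  nra.
Qed.

Theorem lemma6p6 (l : nat) (hl : (2 <= l)%nat) (x : R) :
  forall M : R, exists N : R, forall y : R, N < y -> M < (-1) ^ l * phiK l x y.
Proof.
  intro M.
  set (a := x^2). set (C := 30 * (1 + a)^3).
  assert (ha : 0 <= a) by (unfold a; nra).
  assert (Cp : 0 <= C) by (unfold C; nra).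
  exists (5 * C + 3 + Rabs M + a).
  intros y hy.
  pose proof (Rabs_pos M). pose proof (Rle_abs M).
  assert (hy1 : 1 <= y) by lra.
  pose proof (lam_bound x y hy1) as HL. pose proof (alpha_bound x y hy1) as HA.
  cbv zeta in HL, HA. fold a C in HL, HA.
  assert (y2 : 1 <= y^2) by nra. assert (y4 : 1 <= y^4) by (replace (y^4) with (y^2*y^2) by ring; nra).
  set (w := - lam x y) in *.
  assert (hw : y - 5*C <= w) by nra.
  assert (hal : 1 <= - alpha x y) by nra.
  assert (hbe : 0 <= - beta x y) by (unfold beta; fold a; lra).
  destruct l as [|[|k]]; [lia|lia|].
  unfold phiK.
  replace (Datatypes.S (Datatypes.S k) - 1)%nat with (Datatypes.S k) by lia.
  replace (Datatypes.S (Datatypes.S k) - 2)%nat with k by lia.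
  replace (lam x y) with (- w) by (unfold w; ring).
  rewrite !S_neg.
  assert (hw2 : 2 <= w) by lra.
  pose proof (S_ge_w w hw2 k).
  pose proof (S_mono w hw2 k) as [Sk _].
  pose proof (pm1sq k) as P.
  replace ((-1) ^ Datatypes.S (Datatypes.S k) *
     ((-1) ^ Datatypes.S k * S (Datatypes.S k) w * alpha x y -
      (-1) ^ k * S k w * beta x y))
    with (((-1) ^ k * (-1) ^ k) * (S (Datatypes.S k) w * (- alpha x y) + S k w * (- beta x y)))
    by (simpl; ring).
  rewrite P.
  nra.
Qed.
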